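(* Let $\varphi$ be a finite conjunction of literals of the two forms $x\in y$ and $x = y\setminus z$ (with $x,y,z$ set variables), with finite set of variables $\mathrm{Vars}(\varphi)$. Let $M$ be a set assignment over $\mathrm{Vars}(\varphi)$ satisfying $\varphi$; let $\bar x,\bar y\in\mathrm{Vars}(\varphi)$, let $\overline{M}$ be a set assignment over $\mathrm{Vars}(\varphi)$ satisfying $\varphi$ with $\overline{M}\bar x\neq \overline{M}\bar y$, and let $\mathfrak{t}$ be a set belonging to exactly one of $\overline{M}\bar x$, $\overline{M}\bar y$. Fix a set $\mathfrak{s}$ with $\mathrm{rk}(\mathfrak{s})>\mathrm{rk}(M)$. Define $\mathsf{V}_0=\{u\in\mathrm{Vars}(\varphi)\mid \mathfrak{t}\in\overline{M}u\}$; $\mathsf{V}_n=\{u\in\mathrm{Vars}(\varphi)\mid Mu\cap\{Mw\mid w\in\mathsf{V}_{n-1}\}\neq\emptyset\}$ for $n\ge1$; $M_0v=Mv\cup\{\mathfrak{s}\}$ if $v\in\mathsf{V}_0$ and $M_0v=Mv$ otherwise; for $n\ge1$, $M_nv=M_{n-1}v\cup\{M_{n-1}u\mid u\in\mathsf{V}_{n-1},\ Mu\in Mv\}$ if $v\in\mathsf{V}_n$ and $M_nv=M_{n-1}v$ otherwise. Then for all $h,k>\min(|\mathrm{Vars}(\varphi)|-1,\ \mathrm{rk}(M))$ we have $M_h=M_k$.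
   Context: A set assignment is a map from a finite set of set variables into the von Neumann universe $\mathcal{V}=\bigcup_\alpha\mathcal{V}_\alpha$, $\mathcal{V}_\alpha=\bigcup_{\beta<\alpha}\mathcal{P}(\mathcal{V}_\beta)$; it satisfies $x\in y$ iff $Mx\in My$ and $x=y\setminus z$ iff $Mx=My\setminus Mz$. The rank $\mathrm{rk}(s)$ of a set $s$ is the least ordinal $\alpha$ with $s\subseteq\mathcal{V}_\alpha$, and $\mathrm{rk}(M)=\max\{\mathrm{rk}(Mx)\mid x\in\mathrm{dom}(M)\}$. *)

(* Defs.v *)
(* + mathcomp fintype for the finite set of variables.
   Sets of the von Neumann universe are modelled by Aczel's well-founded
   trees (sets-as-types), with extensional equality [Veq]. *)
From Stdlib Require Import List ClassicalEpsilon.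
From mathcomp Require Import all_boot.

Set Implicit Arguments.
Unset Strict Implicit.
Unset Printing Implicit Defensive.

Inductive V : Type := sup : forall (A : Type), (A -> V) -> V.

Definition idx (x : V) : Type := match x with sup A _ => A end.
Definition elt (x : V) : idx x -> V := match x with sup _ f => f end.
Arguments elt : clear implicits.

Fixpoint Veq (x y : V) {struct x} : Prop :=
  match x with
  | sup A f => match y with
    | sup B g => (forall a : A, exists b : B, Veq (f a) (g b)) /\
                 (forall b : B, exists a : A, Veq (f a) (g b))
    end
  end.

Definition Vin (x y : V) : Prop := exists b : idx y, Veq x (elt y b).

Definition Vdiff (y z : V) : V :=
  @sup {b : idx y | ~ Vin (elt y b) z} (fun p => elt y (proj1_sig p)).
Definition Vunion (x y : V) : V :=
  @sup (idx x + idx y)%type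
       (fun c => match c with inl a => elt x a | inr b => elt y b end).
Definition Vsing (s : V) : V := @sup unit (fun _ => s).
Definition Vif (P : Prop) (a b : V) : V :=
  if excluded_middle_informative P then a else b.

(** rank_le x y  <->  rk(x) <= rk(y) *)
Fixpoint rank_le (x y : V) {struct x} : Prop :=
  match x with
  | sup A f => forall a : A, exists b : idx y, rank_le (f a) (elt y b)
  end.
(** rank_lt x y  <->  rk(x) < rk(y) *)
Definition rank_lt (x y : V) : Prop := exists b : idx y, rank_le x (elt y b).
(** rank_le_nat x n  <->  rk(x) <= n  (i.e. x is a subset of V_n) *)
Fixpoint rank_le_nat (x : V) (n : nat) : Prop :=
  match n with
  | 0 => forall a : idx x, False
  | S m => forall a : idx x, rank_le_nat (elt x a) m
  end.

Inductive lit (T : Type) : Type :=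
| LIn : T -> T -> lit T
| LDiff : T -> T -> T -> lit T.

Definition lit_vars (T : Type) (l : lit T) : list T :=
  match l with LIn x y => x :: y :: nil | LDiff x y z => x :: y :: z :: nil end.

Definition occurs (T : Type) (v : T) (phi : list (lit T)) : Prop :=
  exists l, List.In l phi /\ List.In v (lit_vars l).

Definition sat_lit (T : Type) (M : T -> V) (l : lit T) : Prop :=
  match l with
  | LIn x y => Vin (M x) (M y)
  | LDiff x y z => Veq (M x) (Vdiff (M y) (M z))
  end.

Definition sat (T : Type) (M : T -> V) (phi : list (lit T)) : Prop :=
  forall l, List.In l phi -> sat_lit M l.

(** rk(M) < n, for n a natural number *)
Definition rkM_lt_nat (T : Type) (M : T -> V) (n : nat) : Prop :=
  exists m, n = S m /\ forall x, rank_le_nat (M x) m.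

Section Construction.
Variables (T : finType) (M Mbar : T -> V) (t s : V).

Fixpoint Vs (n : nat) (u : T) : Prop :=
  match n with
  | 0 => Vin t (Mbar u)
  | S m => exists w, Vs m w /\ Vin (M w) (M u)
  end.

Fixpoint Ms (n : nat) (v : T) : V :=
  match n with
  | 0 => Vif (Vs 0 v) (Vunion (M v) (Vsing s)) (M v)
  | S m => Vif (Vs (S m) v)
      (Vunion (Ms m v)
         (@sup {u : T | Vs m u /\ Vin (M u) (M v)} (fun p => Ms m (proj1_sig p))))
      (Ms m v)
  end.
End Construction.

(* Main.v *)
Require Import Defs.
From Stdlib Require Import List.
From mathcomp Require Import all_boot.
From Stdlib Require Import Relations Transitive_Closure ClassicalEpsilon.
Set Implicit Arguments.

Lemma Veq_refl x : Veq x x.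
Proof. induction x as [A f IH]; simpl; split; intro a; exists a; apply IH. Qed.

Lemma Veq_trans x y z : Veq x y -> Veq y z -> Veq x z.
Proof.
revert y z; induction x as [A f IH]; intros [B g] [C k]; simpl.
intros [H1 H2] [H3 H4]; split.
- intro a; destruct (H1 a) as [b Hb]; destruct (H3 b) as [c Hc].
  exists c; exact (IH a _ _ Hb Hc).
- intro c; destruct (H4 c) as [b Hb]; destruct (H2 b) as [a Ha].
  exists a; exact (IH a _ _ Ha Hb).
Qed.

Lemma Vin_Acc y : forall x, Veq x y -> Acc Vin x.
Proof.
induction y as [B g IH]; intros [A f] Hxy; constructor; intros z [a Hz].
simpl in Hxy, Hz; destruct Hxy as [H1 _]; destruct (H1 a) as [b Hb].
apply (IH b); exact (Veq_trans _ _ _ Hz Hb).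
Qed.

Lemma Acc_noloop (X : Type) (R : X -> X -> Prop) x : Acc R x -> ~ R x x.
Proof. induction 1 as [x _ IH]; intro Hxx; exact (IH x Hxx Hxx). Qed.

Lemma rank_le_nat_Veq m : forall x z, Veq x z -> rank_le_nat z m -> rank_le_nat x m.
Proof.
induction m as [|m IH]; intros [A f] [B g]; simpl; intros [H1 _] Hz a;
destruct (H1 a) as [b Hb].
- exact (Hz b).
- exact (IH _ _ Hb (Hz b)).
Qed.

Section S.
Variables (T : finType) (M Mbar : T -> V) (t s : V).

Lemma Vs_rank n : forall u m, Vs M Mbar t n u -> rank_le_nat (M u) m -> (n <= m)%N.
Proof.
induction n as [|n IH]; intros u m; first by [].
simpl; intros [w [Hw [b Hb]]] Hr.
revert b Hb Hr; case: (M u) => B g b Hb Hr.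
destruct m as [|m]; first by destruct (Hr b).
simpl in Hr. have := IH w m Hw (@rank_le_nat_Veq m _ _ Hb (Hr b)). by [].
Qed.

Lemma Vs_chain n : forall u, Vs M Mbar t n u ->
  exists c : nat -> T, c n = u /\ forall i, (i < n)%N -> Vin (M (c i)) (M (c i.+1)).
Proof.
induction n as [|n IH]; intros u.
- intros _; exists (fun _ => u); split; [reflexivity| by []].
- simpl; intros [w [Hw Hin]]; destruct (IH w Hw) as [c [Hc Hs]].
  exists (fun i => if i == n.+1 then u else c i); split.
  + by rewrite eqxx.
  + intros i Hi. rewrite eqSS.
    case: (eqVneq i n) => [->|Hne].
    * by rewrite (ltn_eqF (ltnSn n)) Hc.
    * have Hi' : (i < n)%N by rewrite ltn_neqAle Hne -ltnS.
      rewrite (ltn_eqF (leq_trans Hi' (leqnSn n))) ?(negbTE Hne).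
      exact: Hs.
Qed.

Lemma chain_trans (c : nat -> T) n (Hs : forall i, (i < n)%N -> Vin (M (c i)) (M (c i.+1))) :
  forall i j, (i < j)%N -> (j <= n)%N -> clos_trans V Vin (M (c i)) (M (c j)).
Proof.
intros i j; elim: j => [|j IH]; first by [].
intros Hij Hjn.
case: (eqVneq i j) => [->|Hne].
- apply t_step; apply Hs; exact Hjn.
- have Hij' : (i < j)%N by rewrite ltn_neqAle Hne -ltnS.
  apply (t_trans _ _ _ (M (c j))).
  + apply IH => //; exact (leq_trans (leqnSn j) Hjn).
  + apply t_step; apply Hs; exact Hjn.
Qed.

Lemma Vs_card n u : Vs M Mbar t n u -> (n < #|T|)%N.
Proof.
intros Hv; destruct (@Vs_chain n u Hv) as [c [_ Hs]].
case: (leqP #|T| n) => Hle //.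
exfalso.
pose f := fun i : 'I_n.+1 => c (val i).
have Hni : ~~ injectiveb f.
{ apply/negP => /injectiveP Hinj. have := @leq_card _ _ f Hinj.
  rewrite card_ord. rewrite leqNgt ltnS Hle. by []. }
move/injectivePn: Hni => [i [j Hij Hf]].
have key : forall a b : 'I_n.+1, (val a < val b)%N -> f a = f b -> False.
{ intros a b Hab Hfab.
  have Hct := @chain_trans c n Hs _ _ Hab (ltn_ord b).
  unfold f in Hfab. rewrite Hfab in Hct.
  have HA := Acc_clos_trans V Vin (M (c b)) (@Vin_Acc (M (c b)) (M (c b)) (Veq_refl _)).
  exact (@Acc_noloop _ _ _ HA Hct). }
case: (ltngtP (val i) (val j)) => H.
- exact (key _ _ H Hf).
- exact (key _ _ H (esym Hf)).
- by move: Hij; rewrite (val_inj H) eqxx.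
Qed.

Lemma Vs_empty h : ((#|T| - 1 < h)%N \/ rkM_lt_nat M h) ->
  forall n u, (h <= n)%N -> ~ Vs M Mbar t n u.
Proof.
intros [H|[m [-> Hm]]] n u Hhn Hv.
- have := @Vs_card n u Hv. move: H Hhn. case: #|T| => [|k] /=.
  + by [].
  + rewrite subn1 /= => H1 H2 H3.
    have := leq_trans H1 H2. by rewrite ltnNge -ltnS H3.
- have := @Vs_rank n u m Hv (Hm u). move=> H. have := leq_trans Hhn H. by rewrite ltnn.
Qed.

Lemma Ms_stable h (He : forall n u, (h <= n)%N -> ~ Vs M Mbar t n u) :
  forall j v, Ms M Mbar t s (h + j) v = Ms M Mbar t s h v.
Proof.
induction j as [|j IH]; intro v; first by rewrite addn0.
rewrite addnS /= /Vif.
case: (ClassicalEpsilon.excluded_middle_informative _) => Hv.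
- exfalso; apply (He _ _ (leq_trans (leq_addr j h) (leqnSn _)) Hv).
- apply IH.
Qed.

End S.

Theorem corollary4 (T : finType) (phi : list (lit T)) (M Mbar : T -> V)
    (xb yb : T) (t s : V) :
  (forall v : T, occurs v phi) ->
  sat M phi ->
  sat Mbar phi ->
  ~ Veq (Mbar xb) (Mbar yb) ->
  ((Vin t (Mbar xb) /\ ~ Vin t (Mbar yb)) \/
   (Vin t (Mbar yb) /\ ~ Vin t (Mbar xb))) ->
  (forall x : T, rank_lt (M x) s) ->
  forall h k : nat,
    ((#|T| - 1 < h)%N \/ rkM_lt_nat M h) ->
    ((#|T| - 1 < k)%N \/ rkM_lt_nat M k) ->
    forall v : T, Veq (Ms M Mbar t s h v) (Ms M Mbar t s k v).
Proof.
intros _ _ _ _ _ _ h k Hh Hk v.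
case: (leqP h k) => Hhk.
- rewrite -(subnKC Hhk) (@Ms_stable T M Mbar t s h (@Vs_empty T M Mbar t h Hh)). apply Veq_refl.
- rewrite -(subnKC (ltnW Hhk)) (@Ms_stable T M Mbar t s k (@Vs_empty T M Mbar t k Hk)). apply Veq_refl.
Qed.
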